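(* For every $n\ge5$, the Johnson graph $J(n,2)$ and the Kneser graph $K(n,2)$ have no quantum symmetry.
   Context: $J(n,2)$ has as vertices the $2$-element subsets of $\{1,\dots,n\}$, two vertices adjacent iff the subsets intersect in exactly one element. $K(n,2)$ has the same vertices, two vertices adjacent iff the subsets are disjoint. For a finite simple undirected graph $\Gamma=(V,E)$ with $V=\{1,\dots,N\}$, $C(G_{aut}^+(\Gamma))$ is the universal unital $C^*$-algebra generated by $u_{ij}$, $1\le i,j\le N$, with relations: (R1) $u_{ij}=u_{ij}^*=u_{ij}^2$; (R2) $\sum_{l} u_{il}=1=\sum_{l} u_{li}$ for all $i$; (R3) $u_{ij}u_{kl}=u_{kl}u_{ij}=0$ whenever exactly one of $(i,k)\in E$, $(j,l)\in E$ holds. $\Gamma$ has no quantum symmetry if $C(G_{aut}^+(\Gamma))$ is commutative. *)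

(* Defs.v *)
From Stdlib Require Import Reals List Arith.
Import ListNotations.
Open Scope R_scope.

Definition Cx : Type := (R * R)%type.
Definition Cx_re (z : Cx) : R := fst z.
Definition Cx_im (z : Cx) : R := snd z.
Definition Cx0 : Cx := (0, 0).
Definition Cx1 : Cx := (1, 0).
Definition Cx_add (z w : Cx) : Cx := (fst z + fst w, snd z + snd w).
Definition Cx_mul (z w : Cx) : Cx :=
  (fst z * fst w - snd z * snd w, fst z * snd w + snd z * fst w).
Definition Cx_conj (z : Cx) : Cx := (fst z, - snd z).
Definition Cx_abs (z : Cx) : R := sqrt (fst z * fst z + snd z * snd z).

Record CstarAlg : Type := {
  car :> Type;
  c0 : car;
  c1 : car;
  cadd : car -> car -> car;
  copp : car -> car;
  cmul : car -> car -> car;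
  cscal : Cx -> car -> car;
  cstar : car -> car;
  cnorm : car -> R;
  cadd_assoc : forall x y z, cadd x (cadd y z) = cadd (cadd x y) z;
  cadd_comm : forall x y, cadd x y = cadd y x;
  cadd_0 : forall x, cadd c0 x = x;
  cadd_opp : forall x, cadd x (copp x) = c0;
  cscal_1 : forall x, cscal Cx1 x = x;
  cscal_mul : forall a b x, cscal (Cx_mul a b) x = cscal a (cscal b x);
  cscal_addl : forall a b x, cscal (Cx_add a b) x = cadd (cscal a x) (cscal b x);
  cscal_addr : forall a x y, cscal a (cadd x y) = cadd (cscal a x) (cscal a y);
  cmul_assoc : forall x y z, cmul x (cmul y z) = cmul (cmul x y) z;
  cmul_1l : forall x, cmul c1 x = x;
  cmul_1r : forall x, cmul x c1 = x;
  cmul_addl : forall x y z, cmul (cadd x y) z = cadd (cmul x z) (cmul y z);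
  cmul_addr : forall x y z, cmul x (cadd y z) = cadd (cmul x y) (cmul x z);
  cmul_scall : forall a x y, cmul (cscal a x) y = cscal a (cmul x y);
  cmul_scalr : forall a x y, cmul x (cscal a y) = cscal a (cmul x y);
  cstar_invol : forall x, cstar (cstar x) = x;
  cstar_add : forall x y, cstar (cadd x y) = cadd (cstar x) (cstar y);
  cstar_scal : forall a x, cstar (cscal a x) = cscal (Cx_conj a) (cstar x);
  cstar_mul : forall x y, cstar (cmul x y) = cmul (cstar y) (cstar x);
  cnorm_nonneg : forall x, 0 <= cnorm x;
  cnorm_eq0 : forall x, cnorm x = 0 -> x = c0;
  cnorm_triangle : forall x y, cnorm (cadd x y) <= cnorm x + cnorm y;
  cnorm_scal : forall a x, cnorm (cscal a x) = Cx_abs a * cnorm x;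
  cnorm_submult : forall x y, cnorm (cmul x y) <= cnorm x * cnorm y;
  cnorm_cstar : forall x, cnorm (cmul (cstar x) x) = cnorm x * cnorm x;
  ccomplete : forall s : nat -> car,
    (forall eps, 0 < eps -> exists N, forall m k, (N <= m)%nat -> (N <= k)%nat ->
        cnorm (cadd (s m) (copp (s k))) < eps) ->
    exists L, forall eps, 0 < eps -> exists N, forall m, (N <= m)%nat ->
        cnorm (cadd (s m) (copp L)) < eps
}.

Arguments c0 {_}. Arguments c1 {_}.
Arguments cadd {_}. Arguments cmul {_}. Arguments cstar {_}.

(** A finite simple graph given by an (duplicate-free) list of vertices and an
    adjacency relation. [u] assigns to each pair of vertices an element of [A]. *)
Definition magic_graph_rel {V : Type} (A : CstarAlg) (verts : list V)
    (adj : V -> V -> Prop) (u : V -> V -> A) : Prop :=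
  (forall i j, In i verts -> In j verts ->
     u i j = cstar (u i j) /\ u i j = cmul (u i j) (u i j)) /\
  (forall i, In i verts ->
     fold_right cadd c0 (map (fun l => u i l) verts) = c1 /\
     fold_right cadd c0 (map (fun l => u l i) verts) = c1) /\
  (forall i j k l, In i verts -> In j verts -> In k verts -> In l verts ->
     ((adj i k /\ ~ adj j l) \/ (~ adj i k /\ adj j l)) ->
     cmul (u i j) (u k l) = c0 /\ cmul (u k l) (u i j) = c0).

(** No quantum symmetry: C(G_aut^+(Gamma)) is commutative, i.e. (universal
    property) in every unital C*-algebra the generators of any family
    satisfying R1-R3 commute. *)
Definition no_quantum_symmetry {V : Type} (verts : list V) (adj : V -> V -> Prop) : Prop :=
  forall (A : CstarAlg) (u : V -> V -> A),
    magic_graph_rel A verts adj u ->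
    forall i j k l, In i verts -> In j verts -> In k verts -> In l verts ->
      cmul (u i j) (u k l) = cmul (u k l) (u i j).

(** Ground set {0,...,n-1} (relabelling of {1,...,n}); a 2-subset {a,b} is
    encoded as the pair (a,b) with a < b. *)
Definition two_subsets (n : nat) : list (nat * nat) :=
  flat_map (fun b => map (fun a => (a, b)) (seq 0 b)) (seq 0 n).

Definition inter_size (v w : nat * nat) : nat :=
  length (filter (fun x => orb (Nat.eqb x (fst w)) (Nat.eqb x (snd w)))
                 [fst v; snd v]).

Definition johnson_adj (v w : nat * nat) : Prop := inter_size v w = 1%nat.
Definition kneser_adj (v w : nat * nat) : Prop := inter_size v w = 0%nat.

(* Main.v *)
Require Import Defs.
From Stdlib Require Import Reals List Arith Lia Lra Bool.
Require Import Defs.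
Import ListNotations.
Open Scope R_scope.

Section Alg.
Context {A : CstarAlg}.

Local Infix "⊕" := (@cadd A) (at level 50, left associativity).
Local Infix "⊗" := (@cmul A) (at level 40, left associativity).
Local Notation sc r x := (cscal A (r, 0) x).
Local Notation nrm x := (cnorm A x).
Local Notation st x := (@cstar A x).

Lemma addA (x y z : A) : x ⊕ (y ⊕ z) = x ⊕ y ⊕ z. Proof. apply cadd_assoc. Qed.
Lemma addC (x y : A) : x ⊕ y = y ⊕ x. Proof. apply cadd_comm. Qed.
Lemma add0l (x : A) : c0 ⊕ x = x. Proof. apply cadd_0. Qed.
Lemma add0r (x : A) : x ⊕ c0 = x. Proof. rewrite addC; apply add0l. Qed.
Lemma add_cancel (x y z : A) : x ⊕ y = x ⊕ z -> y = z.
Proof.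
  intro H. rewrite <- (add0l y), <- (add0l z).
  rewrite <- (cadd_opp A x). rewrite (addC x (copp A x)).
  rewrite <- !addA, H. reflexivity.
Qed.
Lemma mulA (x y z : A) : x ⊗ (y ⊗ z) = x ⊗ y ⊗ z. Proof. apply cmul_assoc. Qed.
Lemma mulDl (x y z : A) : (x ⊕ y) ⊗ z = x ⊗ z ⊕ y ⊗ z. Proof. apply cmul_addl. Qed.
Lemma mulDr (x y z : A) : z ⊗ (x ⊕ y) = z ⊗ x ⊕ z ⊗ y. Proof. apply cmul_addr. Qed.
Lemma mul1l (x : A) : c1 ⊗ x = x. Proof. apply cmul_1l. Qed.
Lemma mul1r (x : A) : x ⊗ c1 = x. Proof. apply cmul_1r. Qed.

Lemma sc_mul r s (x : A) : sc r (sc s x) = sc (r * s) x.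
Proof.
  rewrite <- cscal_mul. unfold Cx_mul; simpl. f_equal. f_equal; ring.
Qed.
Lemma sc_addl r s (x : A) : sc (r + s) x = sc r x ⊕ sc s x.
Proof.
  rewrite <- cscal_addl. unfold Cx_add; simpl. f_equal. f_equal; ring.
Qed.
Lemma sc_addr r (x y : A) : sc r (x ⊕ y) = sc r x ⊕ sc r y.
Proof. apply cscal_addr. Qed.
Lemma sc_1 (x : A) : sc 1 x = x. Proof. apply (cscal_1 A). Qed.
Lemma sc_0 (x : A) : sc 0 x = c0.
Proof.
  apply (add_cancel (sc 0 x)). rewrite <- sc_addl, add0r. f_equal; f_equal; ring.
Qed.
Lemma opp_sc (x : A) : copp A x = sc (-1) x.
Proof.
  apply (add_cancel x). rewrite cadd_opp. symmetry.
  transitivity (sc 1 x ⊕ sc (-1) x). rewrite sc_1; reflexivity.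
  rewrite <- sc_addl. replace (1 + -1) with 0 by ring. apply sc_0.
Qed.
Lemma mul0l (x : A) : c0 ⊗ x = c0.
Proof.
  apply (add_cancel (c0 ⊗ x)). rewrite <- mulDl, add0l, add0r. reflexivity.
Qed.
Lemma mul0r (x : A) : x ⊗ c0 = c0.
Proof.
  apply (add_cancel (x ⊗ c0)). rewrite <- mulDr, add0l, add0r. reflexivity.
Qed.
Lemma sc_c0 r : sc r (@c0 A) = c0.
Proof. transitivity (sc r (sc 0 (@c0 A))). rewrite sc_0; reflexivity.
  rewrite sc_mul, Rmult_0_r. apply sc_0. Qed.
Lemma mul_scl r (x y : A) : sc r x ⊗ y = sc r (x ⊗ y). Proof. apply cmul_scall. Qed.
Lemma mul_scr r (x y : A) : x ⊗ sc r y = sc r (x ⊗ y). Proof. apply cmul_scalr. Qed.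
Lemma star_sc r (x : A) : st (sc r x) = sc r (st x).
Proof. rewrite cstar_scal. unfold Cx_conj; simpl. rewrite Ropp_0. reflexivity. Qed.
Lemma star_add (x y : A) : st (x ⊕ y) = st x ⊕ st y. Proof. apply cstar_add. Qed.
Lemma star_mul (x y : A) : st (x ⊗ y) = st y ⊗ st x. Proof. apply cstar_mul. Qed.
Lemma star_star (x : A) : st (st x) = x. Proof. apply cstar_invol. Qed.
Lemma star_c0 : st (@c0 A) = c0.
Proof. transitivity (st (sc 0 (@c0 A))). rewrite sc_0; reflexivity.
  rewrite star_sc. apply sc_0. Qed.
Lemma star_c1 : st (@c1 A) = c1.
Proof.
  rewrite <- (mul1r (st c1)). rewrite <- (star_star c1) at 2.
  rewrite <- star_mul, mul1r. apply star_star.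
Qed.
Lemma sc_neg_add (x : A) : x ⊕ sc (-1) x = c0.
Proof. rewrite <- opp_sc. apply cadd_opp. Qed.
Lemma sub_eq0 (x y : A) : x ⊕ sc (-1) y = c0 -> x = y.
Proof.
  intro H. apply (add_cancel (sc (-1) y)). rewrite addC, H, addC. symmetry; apply sc_neg_add.
Qed.

Lemma norm_sc r (x : A) : nrm (sc r x) = Rabs r * nrm x.
Proof.
  rewrite cnorm_scal. unfold Cx_abs; simpl. f_equal.
  replace (r * r + 0 * 0) with (Rsqr r) by (unfold Rsqr; ring).
  apply sqrt_Rsqr_abs.
Qed.
Lemma norm_c0 : nrm (@c0 A) = 0.
Proof. transitivity (nrm (sc 0 (@c0 A))). rewrite sc_0; reflexivity.
  rewrite norm_sc, Rabs_R0. ring. Qed.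
Lemma norm_ge0 (x : A) : 0 <= nrm x. Proof. apply cnorm_nonneg. Qed.
Lemma norm_tri (x y : A) : nrm (x ⊕ y) <= nrm x + nrm y. Proof. apply cnorm_triangle. Qed.
Lemma norm_mul (x y : A) : nrm (x ⊗ y) <= nrm x * nrm y. Proof. apply cnorm_submult. Qed.
Lemma norm_eq0 (x : A) : nrm x = 0 -> x = c0. Proof. apply cnorm_eq0. Qed.
Lemma norm_star_le (x : A) : nrm x <= nrm (st x).
Proof.
  pose proof (cnorm_cstar A x) as H. pose proof (norm_mul (st x) x) as H2.
  pose proof (norm_ge0 x). pose proof (norm_ge0 (st x)).
  fold (@cstar A x) in *. nra.
Qed.
Lemma norm_star (x : A) : nrm (st x) = nrm x.
Proof.
  apply Rle_antisym. rewrite <- (star_star x) at 2. apply norm_star_le. apply norm_star_le.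
Qed.
Lemma norm_sa_sq (h : A) : st h = h -> nrm (h ⊗ h) = nrm h * nrm h.
Proof. intro H. rewrite <- H at 1. apply cnorm_cstar. Qed.
Lemma norm_proj (p : A) : st p = p -> p ⊗ p = p -> nrm p <= 1.
Proof.
  intros H1 H2. pose proof (norm_sa_sq p H1) as H. rewrite H2 in H.
  pose proof (norm_ge0 p). nra.
Qed.
Lemma norm_mul_le1 (x y : A) : nrm x <= 1 -> nrm y <= 1 -> nrm (x ⊗ y) <= 1.
Proof.
  intros. pose proof (norm_mul x y). pose proof (norm_ge0 x). pose proof (norm_ge0 y). nra.
Qed.

End Alg.

Definition Rsum {T} (l : list T) (g : T -> R) : R := fold_right Rplus 0 (map g l).

Lemma Rsum_app {T} (l1 l2 : list T) g : Rsum (l1 ++ l2) g = Rsum l1 g + Rsum l2 g.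
Proof. induction l1; unfold Rsum in *; simpl. ring. rewrite IHl1. ring. Qed.
Lemma Rsum_ext {T} (l : list T) g1 g2 : (forall y, In y l -> g1 y = g2 y) -> Rsum l g1 = Rsum l g2.
Proof. induction l; simpl; intros; auto. unfold Rsum in *; simpl. rewrite H, IHl; auto. Qed.
Lemma Rsum_add {T} (l : list T) g1 g2 : Rsum l (fun y => g1 y + g2 y) = Rsum l g1 + Rsum l g2.
Proof. induction l; unfold Rsum in *; simpl. ring. rewrite IHl. ring. Qed.
Lemma Rsum_scal {T} (l : list T) r g : Rsum l (fun y => r * g y) = r * Rsum l g.
Proof. induction l; unfold Rsum in *; simpl. ring. rewrite IHl. ring. Qed.
Lemma Rsum_zero {T} (l : list T) g : (forall y, In y l -> g y = 0) -> Rsum l g = 0.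
Proof. induction l; simpl; intros; auto. unfold Rsum in *; simpl. rewrite H, IHl; auto. ring. Qed.
Lemma Rsum_le {T} (l : list T) g1 g2 : (forall y, In y l -> g1 y <= g2 y) -> Rsum l g1 <= Rsum l g2.
Proof. induction l; simpl; intros. unfold Rsum; simpl; lra. unfold Rsum in *; simpl.
  pose proof (H a (or_introl eq_refl)). pose proof (IHl (fun y h => H y (or_intror h))). lra. Qed.
Lemma Rsum_const {T} (l : list T) r : Rsum l (fun _ => r) = INR (length l) * r.
Proof. induction l; unfold Rsum in *; simpl. ring. rewrite IHl. destruct (length l); simpl; ring. Qed.
Lemma Rsum_single {T} (l : list T) g b : NoDup l -> In b l ->
  (forall y, In y l -> y <> b -> g y = 0) -> Rsum l g = g b.
Proof.
  induction l as [|a l IH]; simpl; intros Hnd Hb Hz. contradiction.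
  inversion Hnd; subst. change (Rsum (a :: l) g) with (g a + Rsum l g). destruct Hb as [<-|Hb].
  - rewrite Rsum_zero. ring. intros y Hy. apply Hz; auto. intro; subst; contradiction.
  - rewrite Hz; auto. rewrite IH; auto. ring. intro; subst; contradiction.
Qed.

Section S.
Context {A : CstarAlg}.
Local Infix "⊕" := (@cadd A) (at level 50, left associativity).
Local Infix "⊗" := (@cmul A) (at level 40, left associativity).
Local Notation sc r x := (cscal A (r, 0) x).
Local Notation nrm x := (cnorm A x).
Local Notation st x := (@cstar A x).

Definition lsum {T} (l : list T) (f : T -> A) : A := fold_right cadd c0 (map f l).

Lemma lsum_nil {T} (f : T -> A) : lsum [] f = c0. Proof. reflexivity. Qed.
Lemma lsum_cons {T} (a : T) l f : lsum (a :: l) f = f a ⊕ lsum l f. Proof. reflexivity. Qed.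
Lemma lsum_app {T} (l1 l2 : list T) f : lsum (l1 ++ l2) f = lsum l1 f ⊕ lsum l2 f.
Proof. induction l1; simpl. rewrite lsum_nil, add0l; reflexivity.
  rewrite !lsum_cons, IHl1, addA. reflexivity. Qed.
Lemma lsum_ext {T} (l : list T) f g : (forall y, In y l -> f y = g y) -> lsum l f = lsum l g.
Proof. induction l; simpl; intros; auto. rewrite !lsum_cons, H, IHl; auto. Qed.
Lemma lsum_zero {T} (l : list T) f : (forall y, In y l -> f y = c0) -> lsum l f = c0.
Proof. induction l; simpl; intros; auto. rewrite !lsum_cons, H, IHl; auto. apply add0l. Qed.
Lemma lsum_add {T} (l : list T) f g : lsum l (fun y => f y ⊕ g y) = lsum l f ⊕ lsum l g.
Proof. induction l; simpl. rewrite !lsum_nil, add0l; reflexivity.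
  rewrite !lsum_cons, IHl. rewrite !addA. f_equal. rewrite <- !addA. f_equal. apply addC. Qed.
Lemma lsum_sc {T} (l : list T) r f : lsum l (fun y => sc r (f y)) = sc r (lsum l f).
Proof. induction l; simpl. rewrite !lsum_nil, sc_c0; reflexivity.
  rewrite !lsum_cons, IHl, sc_addr. reflexivity. Qed.
Lemma lsum_mull {T} (l : list T) x f : x ⊗ lsum l f = lsum l (fun y => x ⊗ f y).
Proof. induction l; simpl. rewrite !lsum_nil, mul0r; reflexivity.
  rewrite !lsum_cons, mulDr, IHl. reflexivity. Qed.
Lemma lsum_mulr {T} (l : list T) x f : lsum l f ⊗ x = lsum l (fun y => f y ⊗ x).
Proof. induction l; simpl. rewrite !lsum_nil, mul0l; reflexivity.
  rewrite !lsum_cons, mulDl, IHl. reflexivity. Qed.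
Lemma lsum_star {T} (l : list T) f : st (lsum l f) = lsum l (fun y => st (f y)).
Proof. induction l; simpl. rewrite !lsum_nil, star_c0; reflexivity.
  rewrite !lsum_cons, star_add, IHl. reflexivity. Qed.
Lemma lsum_swap {T U} (l1 : list T) (l2 : list U) f :
  lsum l1 (fun a => lsum l2 (fun b => f a b)) = lsum l2 (fun b => lsum l1 (fun a => f a b)).
Proof.
  induction l1; simpl. rewrite lsum_nil. symmetry; apply lsum_zero; auto.
  rewrite lsum_cons, IHl1. rewrite <- lsum_add. apply lsum_ext. intros; rewrite lsum_cons; reflexivity.
Qed.
Lemma lsum_const {T} (l : list T) g x : lsum l (fun y => sc (g y) x) = sc (Rsum l g) x.
Proof. induction l; simpl. rewrite lsum_nil. unfold Rsum; simpl. symmetry; apply sc_0.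
  rewrite lsum_cons, IHl. unfold Rsum; simpl. rewrite sc_addl. reflexivity. Qed.
Lemma lsum_norm {T} (l : list T) f : nrm (lsum l f) <= Rsum l (fun y => nrm (f y)).
Proof. induction l; simpl. rewrite lsum_nil, norm_c0. unfold Rsum; simpl; lra.
  rewrite lsum_cons. unfold Rsum in *; simpl. pose proof (norm_tri (f a) (lsum l f)). lra. Qed.
Lemma lsum_single {T} (l : list T) f b : NoDup l -> In b l ->
  (forall y, In y l -> y <> b -> f y = c0) -> lsum l f = f b.
Proof.
  induction l as [|a l IH]; simpl; intros Hnd Hb Hz. contradiction.
  inversion Hnd; subst. rewrite lsum_cons. destruct Hb as [<-|Hb].
  - rewrite lsum_zero. apply add0r. intros y Hy. apply Hz; auto. intro; subst; contradiction.
  - rewrite Hz; auto. rewrite IH; auto. apply add0l. intro; subst; contradiction.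
Qed.
Lemma lsum_scsum {T} (l : list T) g1 g2 f :
  lsum l (fun y => sc (g1 y + g2 y) (f y)) = lsum l (fun y => sc (g1 y) (f y)) ⊕ lsum l (fun y => sc (g2 y) (f y)).
Proof. rewrite <- lsum_add. apply lsum_ext; intros; apply sc_addl. Qed.

End S.

Fixpoint padd (u v : list R) : list R :=
  match u, v with
  | [], v => v
  | u, [] => u
  | a :: u', b :: v' => (a + b) :: padd u' v'
  end.
Definition pscal (r : R) (u : list R) : list R := map (Rmult r) u.
Fixpoint pmul (u v : list R) : list R :=
  match u with
  | [] => []
  | a :: u' => padd (pscal a v) (0 :: pmul u' v)
  end.

Section Poly.
Context {A : CstarAlg}.
Local Infix "⊕" := (@cadd A) (at level 50, left associativity).
Local Infix "⊗" := (@cmul A) (at level 40, left associativity).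
Local Notation sc r x := (cscal A (r, 0) x).
Local Notation nrm x := (cnorm A x).
Local Notation st x := (@cstar A x).

Lemma add_swap (a b c d : A) : (a ⊕ b) ⊕ (c ⊕ d) = (a ⊕ c) ⊕ (b ⊕ d).
Proof. rewrite !addA. f_equal. rewrite <- !addA. f_equal. apply addC. Qed.

Variables p g : A.

Fixpoint ev (cs : list R) : A :=
  match cs with
  | [] => c0
  | c :: cs' => sc c p ⊕ g ⊗ ev cs'
  end.

Hypothesis pp : p ⊗ p = p.
Hypothesis pg : p ⊗ g = g.
Hypothesis gp : g ⊗ p = g.

Lemma p_ev cs : p ⊗ ev cs = ev cs.
Proof. induction cs; simpl. apply mul0r. rewrite mulDr, mul_scr, pp, mulA, pg. reflexivity. Qed.
Lemma ev_p cs : ev cs ⊗ p = ev cs.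
Proof. induction cs; simpl. apply mul0l. rewrite mulDl, mul_scl, pp, <- mulA, IHcs. reflexivity. Qed.
Lemma g_ev cs : g ⊗ ev cs = ev cs ⊗ g.
Proof. induction cs; simpl. rewrite mul0r, mul0l; auto.
  rewrite mulDr, mulDl, !mul_scr, !mul_scl, gp, pg, <- (mulA g (ev cs) g), <- IHcs, mulA. reflexivity. Qed.
Lemma ev_padd u v : ev (padd u v) = ev u ⊕ ev v.
Proof.
  revert v; induction u as [|a u IH]; intros v; simpl. rewrite add0l; auto.
  destruct v as [|b v]; simpl. rewrite add0r; auto.
  rewrite IH, mulDr, sc_addl. apply add_swap.
Qed.
Lemma ev_pscal r u : ev (pscal r u) = sc r (ev u).
Proof.
  induction u as [|a u IH]; simpl. rewrite sc_c0; auto.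
  fold (pscal r u). rewrite IH, sc_addr, sc_mul, mul_scr. reflexivity.
Qed.
Lemma ev_pmul u v : ev (pmul u v) = ev u ⊗ ev v.
Proof.
  induction u as [|a u IH]; simpl. rewrite mul0l; auto.
  rewrite ev_padd, ev_pscal. simpl. rewrite IH, sc_0, add0l.
  rewrite mulDl, mul_scl, p_ev, mulA. reflexivity.
Qed.
Lemma ev_zero v : (forall i, nth i v 0 = 0) -> ev v = c0.
Proof.
  induction v as [|b v IH]; simpl; intros H. auto.
  rewrite IH. pose proof (H 0%nat) as H0; simpl in H0; subst. rewrite sc_0, mul0r, add0l; auto.
  intro i. apply (H (S i)).
Qed.
Lemma ev_eq u v : (forall i, nth i u 0 = nth i v 0) -> ev u = ev v.
Proof.
  revert v; induction u as [|a u IH]; intros v H.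
  - symmetry; apply ev_zero. intro i; rewrite <- H. destruct i; reflexivity.
  - destruct v as [|b v].
    + apply ev_zero. intro i. rewrite H. destruct i; reflexivity.
    + simpl. pose proof (H 0%nat) as H0; simpl in H0; subst. rewrite (IH v); auto.
      intro i; apply (H (S i)).
Qed.
Lemma ev_star : st p = p -> st g = g -> forall cs, st (ev cs) = ev cs.
Proof.
  intros Hp Hg cs; induction cs; simpl. apply star_c0.
  rewrite star_add, star_sc, Hp, star_mul, IHcs, Hg, <- g_ev. reflexivity.
Qed.
Lemma ev_1 : ev [1] = p.
Proof. simpl. rewrite mul0r, add0r. apply sc_1. Qed.
Lemma ev_X : ev [0;1] = g.
Proof. simpl. rewrite mul0r, add0r, sc_0, add0l, sc_1. apply gp. Qed.
Lemma ev_a : ev [1;1] = p ⊕ g.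
Proof. simpl. rewrite mul0r, add0r, !sc_1, gp. reflexivity. Qed.
Lemma ev_b : ev [1;-1] = p ⊕ sc (-1) g.
Proof. simpl. rewrite mul0r, add0r, sc_1, mul_scr, gp. reflexivity. Qed.

End Poly.

Ltac nth_eq := let i := fresh "i" in intro i; do 7 (destruct i as [|i]; [cbn; lra|]); cbn; reflexivity.

Section Anal.
Context {A : CstarAlg}.
Local Infix "⊕" := (@cadd A) (at level 50, left associativity).
Local Infix "⊗" := (@cmul A) (at level 40, left associativity).
Local Notation sc r x := (cscal A (r, 0) x).
Local Notation nrm x := (cnorm A x).
Local Notation st x := (@cstar A x).

Definition Proj (p : A) := st p = p /\ p ⊗ p = p.
Definition Pcond (p g : A) := st g = g /\ p ⊗ g = g /\ g ⊗ p = g /\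
  nrm (p ⊕ g) <= 1 /\ nrm (p ⊕ sc (-1) g) <= 1.
Definition Tm (p g : A) : A := ev p g [0; 3/2; 0; -1/2].

Lemma norm_sc_le r (x : A) : nrm x <= 1 -> 0 <= r -> nrm (sc r x) <= r.
Proof. intros. rewrite norm_sc, Rabs_pos_eq by lra. pose proof (norm_ge0 x). nra. Qed.

Lemma T_step p g : Proj p -> Pcond p g -> Pcond p (Tm p g).
Proof.
  intros [Hps Hpp] [Hgs [Hpg [Hgp [Ha Hb]]]].
  rewrite <- (ev_a p g Hgp) in Ha. rewrite <- (ev_b p g Hgp) in Hb.
  unfold Tm. split; [|split; [|split; [|split]]].
  - apply ev_star; auto.
  - apply p_ev; auto.
  - apply ev_p; auto.
  - assert (E : ev p g [1] ⊕ ev p g [0; 3/2; 0; -1/2] =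
       sc (1/4) (ev p g [1;1] ⊗ ev p g [1;1] ⊗ ev p g [1;1]) ⊕
       sc (3/4) (ev p g [1;1] ⊗ ev p g [1;1] ⊗ ev p g [1;-1])).
    { rewrite <- !(ev_pmul p g) by assumption. rewrite <- !(ev_pscal p g), <- !(ev_padd p g).
      apply ev_eq. nth_eq. }
    rewrite ev_1 in E. rewrite E. eapply Rle_trans. apply norm_tri.
    assert (H1 : nrm (ev p g [1;1] ⊗ ev p g [1;1] ⊗ ev p g [1;1]) <= 1) by (repeat apply norm_mul_le1; auto).
    assert (H2 : nrm (ev p g [1;1] ⊗ ev p g [1;1] ⊗ ev p g [1;-1]) <= 1) by (repeat apply norm_mul_le1; auto).
    pose proof (norm_sc_le (1/4) _ H1). pose proof (norm_sc_le (3/4) _ H2). lra.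
  - assert (E : ev p g [1] ⊕ sc (-1) (ev p g [0; 3/2; 0; -1/2]) =
       sc (1/4) (ev p g [1;-1] ⊗ ev p g [1;-1] ⊗ ev p g [1;-1]) ⊕
       sc (3/4) (ev p g [1;-1] ⊗ ev p g [1;-1] ⊗ ev p g [1;1])).
    { rewrite <- !(ev_pmul p g) by assumption. rewrite <- !(ev_pscal p g), <- !(ev_padd p g).
      apply ev_eq. nth_eq. }
    rewrite ev_1 in E. rewrite E. eapply Rle_trans. apply norm_tri.
    assert (H1 : nrm (ev p g [1;-1] ⊗ ev p g [1;-1] ⊗ ev p g [1;-1]) <= 1) by (repeat apply norm_mul_le1; auto).
    assert (H2 : nrm (ev p g [1;-1] ⊗ ev p g [1;-1] ⊗ ev p g [1;1]) <= 1) by (repeat apply norm_mul_le1; auto).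
    pose proof (norm_sc_le (1/4) _ H1). pose proof (norm_sc_le (3/4) _ H2). lra.
Qed.

Lemma T_bound p g : Proj p -> Pcond p g -> 3 * (nrm g * nrm g) <= 2.
Proof.
  intros [Hps Hpp] [Hgs [Hpg [Hgp [Ha Hb]]]].
  rewrite <- (ev_a p g Hgp) in Ha. rewrite <- (ev_b p g Hgp) in Hb.
  assert (E : ev p g [1] ⊕ sc 3 (ev p g [0;1] ⊗ ev p g [0;1]) =
     sc (1/4) (ev p g [1;1] ⊗ ev p g [1;1] ⊗ ev p g [1;1] ⊗ ev p g [1;1] ⊕
               ev p g [1;1] ⊗ ev p g [1;1] ⊗ ev p g [1;1] ⊗ ev p g [1;-1] ⊕
               ev p g [1;1] ⊗ ev p g [1;-1] ⊗ ev p g [1;-1] ⊗ ev p g [1;-1] ⊕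
               ev p g [1;-1] ⊗ ev p g [1;-1] ⊗ ev p g [1;-1] ⊗ ev p g [1;-1])).
  { rewrite <- !(ev_pmul p g) by assumption. rewrite <- !(ev_padd p g), <- !(ev_pscal p g), <- !(ev_padd p g).
    apply ev_eq. nth_eq. }
  rewrite ev_1, ev_X in E by assumption.
  assert (N1 : nrm (p ⊕ sc 3 (g ⊗ g)) <= 1).
  { rewrite E, norm_sc, Rabs_pos_eq by lra.
    set (x1 := ev p g [1;1] ⊗ ev p g [1;1] ⊗ ev p g [1;1] ⊗ ev p g [1;1]).
    set (x2 := ev p g [1;1] ⊗ ev p g [1;1] ⊗ ev p g [1;1] ⊗ ev p g [1;-1]).
    set (x3 := ev p g [1;1] ⊗ ev p g [1;-1] ⊗ ev p g [1;-1] ⊗ ev p g [1;-1]).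
    set (x4 := ev p g [1;-1] ⊗ ev p g [1;-1] ⊗ ev p g [1;-1] ⊗ ev p g [1;-1]).
    assert (nrm x1 <= 1) by (repeat apply norm_mul_le1; auto).
    assert (nrm x2 <= 1) by (repeat apply norm_mul_le1; auto).
    assert (nrm x3 <= 1) by (repeat apply norm_mul_le1; auto).
    assert (nrm x4 <= 1) by (repeat apply norm_mul_le1; auto).
    pose proof (norm_tri (x1 ⊕ x2 ⊕ x3) x4). pose proof (norm_tri (x1 ⊕ x2) x3).
    pose proof (norm_tri x1 x2). lra. }
  assert (N2 : nrm (sc 3 (g ⊗ g)) <= 2).
  { assert (sc 3 (g ⊗ g) = (p ⊕ sc 3 (g ⊗ g)) ⊕ sc (-1) p).
    { rewrite (addC p), <- addA, sc_neg_add, add0r. reflexivity. }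
    rewrite H. eapply Rle_trans. apply norm_tri. rewrite norm_sc.
    pose proof (norm_proj p Hps Hpp). replace (Rabs (-1)) with 1 by (rewrite Rabs_left; lra). lra. }
  rewrite norm_sc, Rabs_pos_eq, norm_sa_sq in N2 by (auto; lra). lra.
Qed.

Lemma T_lower p g : Proj p -> Pcond p g -> 3/2 * nrm g - 1/2 * (nrm g * nrm g * nrm g) <= nrm (Tm p g).
Proof.
  intros [Hps Hpp] [Hgs [Hpg [Hgp [Ha Hb]]]].
  assert (E : ev p g [0; 3/2; 0; -1/2] = sc (3/2) (ev p g [0;1]) ⊕ sc (-1/2) (ev p g [0;1] ⊗ ev p g [0;1] ⊗ ev p g [0;1])).
  { rewrite <- !(ev_pmul p g) by assumption. rewrite <- !(ev_pscal p g), <- !(ev_padd p g).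
    apply ev_eq. nth_eq. }
  rewrite ev_X in E by assumption. unfold Tm. rewrite E.
  assert (sc (3/2) g = (sc (3/2) g ⊕ sc (-1/2) (g ⊗ g ⊗ g)) ⊕ sc (1/2) (g ⊗ g ⊗ g)).
  { rewrite <- addA, <- sc_addl. replace (-1/2 + 1/2) with 0 by field. rewrite sc_0, add0r. reflexivity. }
  pose proof (norm_tri (sc (3/2) g ⊕ sc (-1/2) (g ⊗ g ⊗ g)) (sc (1/2) (g ⊗ g ⊗ g))).
  rewrite <- H in H0. rewrite !norm_sc in H0. rewrite !Rabs_pos_eq in H0 by lra.
  pose proof (norm_mul (g ⊗ g) g). pose proof (norm_mul g g). pose proof (norm_ge0 g).
  pose proof (norm_ge0 (g ⊗ g)).
  assert (nrm (g ⊗ g ⊗ g) <= nrm g * nrm g * nrm g) by nra.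
  lra.
Qed.

Lemma lemH p h : Proj p -> Pcond p h -> h = c0.
Proof.
  intros Hp Hh. apply norm_eq0.
  set (gs := fun k => Nat.iter k (Tm p) h).
  assert (HP : forall k, Pcond p (gs k)).
  { induction k; simpl; auto. apply T_step; auto. }
  assert (Hr : forall k, nrm (gs (S k)) >= 7/6 * nrm (gs k)).
  { intro k. change (gs (S k)) with (Tm p (gs k)).
    pose proof (T_lower p (gs k) Hp (HP k)). pose proof (T_bound p (gs k) Hp (HP k)).
    pose proof (norm_ge0 (gs k)).
    assert (nrm (gs k) * nrm (gs k) <= 2/3) by lra.
    pose proof (Rmult_le_compat_l (nrm (gs k)) _ _ H1 H2). lra. }
  assert (Hk : forall k, (7/6)^k * nrm h <= nrm (gs k)).
  { induction k. simpl. lra. change ((7/6)^(S k)) with (7/6 * (7/6)^k).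
    pose proof (Hr k). lra. }
  assert (Hle1 : forall k, nrm (gs k) <= 1).
  { intro k. pose proof (T_bound p (gs k) Hp (HP k)). pose proof (norm_ge0 (gs k)). nra. }
  assert (Hbern : forall k, 1 + INR k / 6 <= (7/6)^k).
  { induction k. simpl. lra. change ((7/6)^(S k)) with (7/6 * (7/6)^k).
    rewrite S_INR. pose proof (pos_INR k). lra. }
  pose proof (norm_ge0 h).
  destruct (Req_dec (nrm h) 0) as [E|Ne]; auto. exfalso.
  assert (Hpos : 0 < nrm h / 6) by lra.
  destruct (archimed_cor1 _ Hpos) as [N [HN1 HN2]].
  pose proof (Hk N). pose proof (Hle1 N). pose proof (Hbern N).
  assert (0 < INR N) by (apply lt_0_INR; lia).
  assert (6 < nrm h * INR N).
  { apply Rinv_lt_contravar in HN1. rewrite Rinv_inv in HN1. 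
    2: { apply Rmult_lt_0_compat; auto. apply Rinv_0_lt_compat; auto. }
    replace (/ (nrm h / 6)) with (6 / nrm h) in HN1 by (field; lra).
    apply (Rmult_lt_compat_l (nrm h)) in HN1; [|lra].
    replace (nrm h * (6 / nrm h)) with 6 in HN1 by (field; lra). lra. }
  nra.
Qed.


Lemma lemY p y t : Proj p -> st y = y -> p ⊗ y = y -> y ⊗ p = y -> 0 <= t ->
  nrm (p ⊕ sc (-1) y) <= 1 -> nrm (sc t p ⊕ y) <= t -> y = c0.
Proof.
  intros Hp Hys Hpy Hyp Ht H1 H2.
  pose proof (norm_proj p (proj1 Hp) (proj2 Hp)) as Np.
  set (e := / (1 + t)).
  assert (He : 0 < e) by (apply Rinv_0_lt_compat; lra).
  assert (HeE : e * (1 + t) = 1) by (unfold e; field; lra).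
  assert (Hh : sc e y = c0).
  { apply (lemH p); auto. split; [|split; [|split; [|split]]].
    - rewrite star_sc, Hys; auto.
    - rewrite mul_scr, Hpy; auto.
    - rewrite mul_scl, Hyp; auto.
    - assert (E : p ⊕ sc e y = sc e (p ⊕ (sc t p ⊕ y))).
      { rewrite !sc_addr, sc_mul, addA, <- sc_addl.
        replace (e + e * t) with 1 by (rewrite <- HeE; ring). rewrite sc_1; auto. }
      rewrite E, norm_sc, Rabs_pos_eq by lra.
      pose proof (norm_tri p (sc t p ⊕ y)). 
      apply Rle_trans with (e * (1 + t)); [|lra]. apply Rmult_le_compat_l; lra.
    - assert (E : p ⊕ sc (-1) (sc e y) = sc e ((p ⊕ sc (-1) y) ⊕ sc t p)).
      { rewrite !sc_addr, !sc_mul. rewrite (addC _ (sc (e * t) p)), addA, <- sc_addl.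
        replace (e * t + e) with 1 by (rewrite <- HeE; ring). rewrite sc_1.
        replace (e * -1) with (-1 * e) by ring. auto. }
      rewrite E, norm_sc, Rabs_pos_eq by lra.
      pose proof (norm_tri (p ⊕ sc (-1) y) (sc t p)). rewrite norm_sc, Rabs_pos_eq in H by lra.
      apply Rle_trans with (e * (1 + t)); [|lra]. apply Rmult_le_compat_l; nra. }
  transitivity (sc (1 + t) (sc e y)).
  rewrite sc_mul. replace ((1 + t) * e) with 1 by (unfold e; field; lra). rewrite sc_1; auto.
  rewrite Hh. apply sc_c0.
Qed.

Lemma proj_compl q : Proj q -> Proj (c1 ⊕ sc (-1) q).
Proof.
  intros [Hs Hq]. split.
  - rewrite star_add, star_c1, star_sc, Hs; auto.
  - rewrite mulDl, mul1l, mul_scl, mulDr, mul1r, mul_scr, Hq, sc_neg_add, sc_c0, add0r.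
    reflexivity.
Qed.

Lemma key_sub p q : Proj p -> Proj q -> nrm (p ⊕ sc (-1) (p ⊗ q ⊗ p)) <= 1.
Proof.
  intros Hp Hq. set (r := c1 ⊕ sc (-1) q).
  assert (Hr : Proj r) by (apply proj_compl; auto).
  destruct Hp as [Hps Hpp]. destruct Hr as [Hrs Hrr].
  assert (E : p ⊕ sc (-1) (p ⊗ q ⊗ p) = st (r ⊗ p) ⊗ (r ⊗ p)).
  { rewrite star_mul, Hrs, Hps, mulA, <- (mulA p r r), Hrr.
    unfold r. rewrite mulDr, mul1r, mul_scr, mulDl, Hpp, mul_scl. reflexivity. }
  rewrite E, cnorm_cstar.
  pose proof (norm_mul r p). pose proof (norm_proj r Hrs Hrr). pose proof (norm_proj p Hps Hpp).
  pose proof (norm_ge0 r). pose proof (norm_ge0 p). pose proof (norm_ge0 (r ⊗ p)).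
  assert (nrm (r ⊗ p) <= 1) by nra. nra.
Qed.

Lemma NoDup_rem {T} (dec : forall x y : T, {x=y}+{x<>y}) b (l : list T) :
  NoDup l -> NoDup (remove dec b l).
Proof.
  induction l as [|a l IH]; simpl; intros H. constructor.
  inversion H; subst. destruct (dec b a). auto. constructor; auto.
  intro Hin. apply in_remove in Hin. tauto.
Qed.

Lemma lsum_remove {T} (dec : forall x y : T, {x=y}+{x<>y}) (l : list T) (f : T -> A) b :
  NoDup l -> In b l -> lsum l f = f b ⊕ lsum (remove dec b l) f.
Proof.
  induction l as [|a l IH]; simpl; intros Hnd Hb. contradiction.
  inversion Hnd; subst. rewrite lsum_cons. destruct (dec b a) as [<-|Hne].
  - rewrite notin_remove; auto.
  - destruct Hb as [->|Hb]. congruence. rewrite lsum_cons, IH; auto.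
    rewrite !addA, (addC (f a)). reflexivity.
Qed.

Lemma lemO {T} (dec : forall x y : T, {x=y}+{x<>y}) (l : list T) (f : T -> A) b b' :
  NoDup l -> (forall y, In y l -> Proj (f y)) -> lsum l f = c1 ->
  In b l -> In b' l -> b <> b' -> f b ⊗ f b' = c0.
Proof.
  intros Hnd Hpr Hs Hb Hb' Hne.
  set (p := f b). set (q := f b').
  assert (Hp : Proj p) by (apply Hpr; auto). assert (Hq : Proj q) by (apply Hpr; auto).
  destruct Hp as [Hps Hpp]. destruct Hq as [Hqs Hqq].
  set (l1 := remove dec b l).
  assert (Hnd1 : NoDup l1) by (apply NoDup_rem; auto).
  assert (E1 : lsum l1 f = c1 ⊕ sc (-1) p).
  { rewrite (lsum_remove dec l f b) in Hs; auto. fold p l1 in Hs. rewrite <- Hs.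
    rewrite (addC p), <- addA, sc_neg_add, add0r. reflexivity. }
  set (F := fun y => p ⊗ f y ⊗ p).
  assert (E2 : lsum l1 F = c0).
  { unfold F. rewrite <- (lsum_mulr l1 p (fun y => p ⊗ f y)), <- lsum_mull, E1.
    rewrite mulDr, mul1r, mul_scr, Hpp, sc_neg_add. apply mul0l. }
  assert (Hb'1 : In b' l1) by (apply in_in_remove; auto).
  set (l2 := remove dec b' l1).
  rewrite (lsum_remove dec l1 F b') in E2; auto. fold l2 in E2.
  set (y0 := F b') in *.
  assert (Ey0 : y0 = sc (-1) (lsum l2 F)).
  { apply (add_cancel (lsum l2 F)). rewrite addC, E2, sc_neg_add. reflexivity. }
  set (t := INR (length l2)).
  assert (Ht : 0 <= t) by apply pos_INR.
  assert (E3 : sc t p ⊕ y0 = lsum l2 (fun y => p ⊕ sc (-1) (F y))).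
  { rewrite lsum_add, lsum_sc, <- Ey0. f_equal.
    transitivity (lsum l2 (fun _ => sc 1 p)). rewrite lsum_const, Rsum_const. unfold t. f_equal. f_equal. ring.
    apply lsum_ext; intros; apply sc_1. }
  assert (N3 : nrm (sc t p ⊕ y0) <= t).
  { rewrite E3. eapply Rle_trans. apply lsum_norm.
    apply Rle_trans with (Rsum l2 (fun _ => 1)). apply Rsum_le. intros y Hy. unfold F.
    apply key_sub. split; auto. apply Hpr. unfold l2, l1 in Hy. apply in_remove in Hy. destruct Hy as [Hy _].
    apply in_remove in Hy. tauto.
    rewrite Rsum_const. unfold t. lra. }
  assert (Hy0 : y0 = c0).
  { apply (lemY p y0 t); auto. split; auto.
    - unfold y0, F. rewrite !star_mul, Hps. fold q. rewrite Hqs, mulA. reflexivity.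
    - unfold y0, F. rewrite !mulA, Hpp. reflexivity.
    - unfold y0, F. rewrite <- !mulA, Hpp. reflexivity.
    - unfold y0, F. apply key_sub; split; auto. }
  assert (Hqp : q ⊗ p = c0).
  { apply norm_eq0. assert (nrm (q ⊗ p) * nrm (q ⊗ p) = 0).
    { rewrite <- cnorm_cstar. fold (st (q ⊗ p)). rewrite star_mul, Hps, Hqs.
      rewrite mulA, <- (mulA p q q), Hqq. change (p ⊗ q ⊗ p) with y0. rewrite Hy0. apply norm_c0. }
    nra. }
  transitivity (st (q ⊗ p)). rewrite star_mul, Hps, Hqs. reflexivity.
  rewrite Hqp. apply star_c0.
Qed.

End Anal.

Lemma two_subsets_S n : two_subsets (S n) = two_subsets n ++ map (fun a => (a, n)) (seq 0 n).
Proof.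
  unfold two_subsets. rewrite seq_S, flat_map_app. simpl. rewrite app_nil_r. reflexivity.
Qed.

Lemma in_two_subsets n a b : In (a, b) (two_subsets n) <-> (a < b < n)%nat.
Proof.
  unfold two_subsets. rewrite in_flat_map. split.
  - intros [x [Hx Hin]]. apply in_map_iff in Hin. destruct Hin as [y [Hy Hy']].
    inversion Hy; subst. apply in_seq in Hx. apply in_seq in Hy'. lia.
  - intros H. exists b. split. apply in_seq; lia. apply in_map_iff. exists a. split; auto. apply in_seq; lia.
Qed.

Lemma in_ts n (x : nat * nat) : In x (two_subsets n) <-> (fst x < snd x < n)%nat.
Proof. destruct x; apply in_two_subsets. Qed.

Lemma NoDup_two_subsets n : NoDup (two_subsets n).
Proof.
  induction n. constructor. rewrite two_subsets_S. apply NoDup_app; auto.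
  - apply NoDup_map_NoDup_ForallPairs. intros x y _ _ H; inversion H; auto. apply seq_NoDup.
  - intros x H1 H2. apply in_map_iff in H2. destruct H2 as [a [<- _]].
    apply in_two_subsets in H1. lia.
Qed.

Definition ind (c : nat) (B : nat * nat) : R :=
  if orb (Nat.eqb c (fst B)) (Nat.eqb c (snd B)) then 1 else 0.
Definition indn (c a : nat) : R := if Nat.eqb c a then 1 else 0.

Lemma ind_split c B : (fst B <> snd B)%nat -> ind c B = indn c (fst B) + indn c (snd B).
Proof.
  intros H. unfold ind, indn. destruct (Nat.eqb_spec c (fst B)), (Nat.eqb_spec c (snd B)); simpl; lra || lia.
Qed.

Lemma Rsum_indn n c : (c < n)%nat -> Rsum (seq 0 n) (fun a => indn c a) = 1.
Proof.
  intros H. rewrite (Rsum_single _ _ c). unfold indn; rewrite Nat.eqb_refl; auto.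
  apply seq_NoDup. apply in_seq; lia.
  intros y _ Hy. unfold indn. destruct (Nat.eqb_spec c y); auto. congruence.
Qed.
Lemma Rsum_indn' n c : Rsum (seq 0 n) (fun a => indn a c) = Rsum (seq 0 n) (fun a => indn c a).
Proof. apply Rsum_ext; intros; unfold indn. rewrite Nat.eqb_sym; auto. Qed.

Lemma C3 n y : In y (two_subsets n) -> Rsum (seq 0 n) (fun a => ind a y) = 2.
Proof.
  intros Hy. apply in_ts in Hy.
  rewrite (Rsum_ext _ _ (fun a => indn a (fst y) + indn a (snd y))).
  rewrite Rsum_add, !Rsum_indn', !Rsum_indn by lia. ring.
  intros a _. apply ind_split. lia.
Qed.

Lemma C1 n c : (c < n)%nat -> Rsum (two_subsets n) (fun B => ind c B) = INR n - 1.
Proof.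
  induction n; intros Hc. lia.
  rewrite two_subsets_S, Rsum_app. unfold Rsum at 2. rewrite map_map. fold (Rsum (seq 0 n) (fun a => ind c (a, n))).
  destruct (Nat.eq_dec c n) as [->|Hne].
  - rewrite Rsum_zero. rewrite (Rsum_ext _ _ (fun _ => 1)). rewrite Rsum_const, length_seq, S_INR. ring.
    intros a _. unfold ind; simpl. rewrite Nat.eqb_refl, orb_true_r. auto.
    intros B HB. apply in_ts in HB. unfold ind. destruct (Nat.eqb_spec n (fst B)), (Nat.eqb_spec n (snd B)); simpl; auto; lia.
  - rewrite IHn by lia. rewrite (Rsum_ext _ _ (fun a => indn c a)). rewrite Rsum_indn by lia. rewrite S_INR. ring.
    intros a _. unfold ind, indn; simpl. destruct (Nat.eqb_spec c n); [lia|]. rewrite orb_false_r. auto.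
Qed.

Lemma C2 n c p : (c < n)%nat -> (p < n)%nat ->
  Rsum (two_subsets n) (fun B => ind c B * ind p B) = if Nat.eqb c p then INR n - 1 else 1.
Proof.
  intros Hc Hp. destruct (Nat.eqb_spec c p) as [<-|Hne].
  - rewrite <- (C1 n c Hc). apply Rsum_ext. intros. unfold ind; destruct (_ || _)%bool; ring.
  - rewrite (Rsum_single _ _ (Nat.min c p, Nat.max c p)).
    + unfold ind; simpl. destruct (Nat.min_spec c p) as [[? ->]|[? ->]]; destruct (Nat.max_spec c p) as [[? ->]|[? ->]];
      rewrite ?Nat.eqb_refl; simpl; rewrite ?orb_true_r; simpl; try ring; lia.
    + apply NoDup_two_subsets.
    + apply in_two_subsets. lia.
    + intros [y1 y2] Hy Hne2. apply in_two_subsets in Hy. unfold ind; simpl.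
      destruct (Nat.eqb_spec c y1), (Nat.eqb_spec c y2), (Nat.eqb_spec p y1), (Nat.eqb_spec p y2); simpl; try ring;
      exfalso; apply Hne2; subst; f_equal; lia.
Qed.

Definition isz (v w : nat * nat) : R := INR (inter_size v w).

Lemma isz_ind v w : isz v w = ind (fst v) w + ind (snd v) w.
Proof.
  unfold isz, inter_size, ind. simpl.
  destruct (Nat.eqb (fst v) (fst w) || Nat.eqb (fst v) (snd w))%bool;
  destruct (Nat.eqb (snd v) (fst w) || Nat.eqb (snd v) (snd w))%bool; simpl; lra.
Qed.

Lemma inter_size_sym n v w : In v (two_subsets n) -> In w (two_subsets n) -> inter_size v w = inter_size w v.
Proof.
  intros Hv Hw. apply in_ts in Hv, Hw. destruct v as [v1 v2], w as [w1 w2]. simpl in *.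
  unfold inter_size; simpl.
  destruct (Nat.eqb_spec v1 w1), (Nat.eqb_spec v1 w2), (Nat.eqb_spec v2 w1), (Nat.eqb_spec v2 w2),
    (Nat.eqb_spec w1 v1), (Nat.eqb_spec w1 v2), (Nat.eqb_spec w2 v1), (Nat.eqb_spec w2 v2); simpl; auto; lia.
Qed.

Lemma inter_size_2 n v w : In v (two_subsets n) -> In w (two_subsets n) -> (inter_size v w = 2%nat <-> v = w).
Proof.
  intros Hv Hw. apply in_ts in Hv, Hw. destruct v as [v1 v2], w as [w1 w2]. simpl in *.
  unfold inter_size; simpl. split.
  - destruct (Nat.eqb_spec v1 w1), (Nat.eqb_spec v1 w2), (Nat.eqb_spec v2 w1), (Nat.eqb_spec v2 w2); simpl;
    intro H; try discriminate; f_equal; lia.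
  - intros H; inversion H; subst. rewrite !Nat.eqb_refl. simpl. rewrite orb_true_r. reflexivity.
Qed.

Lemma inter_size_le2 v w : (inter_size v w <= 2)%nat.
Proof. unfold inter_size; simpl. destruct (_ || _)%bool, (_ || _)%bool; simpl; lia. Qed.

Lemma C4 n c B' : (c < n)%nat -> In B' (two_subsets n) ->
  Rsum (two_subsets n) (fun B => ind c B * isz B B') = 2 + (INR n - 2) * ind c B'.
Proof.
  intros Hc HB'. assert (HB2 := HB'). apply in_ts in HB2.
  rewrite (Rsum_ext _ _ (fun B => ind c B * ind (fst B') B + ind c B * ind (snd B') B)).
  rewrite Rsum_add, !C2 by lia. unfold ind.
  destruct (Nat.eqb_spec c (fst B')), (Nat.eqb_spec c (snd B')); simpl; try lia; ring.
  intros B HB. unfold isz. rewrite (inter_size_sym n B B'); auto. fold (isz B' B). rewrite isz_ind. ring.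
Qed.

Inductive lexp := LAt (i : nat) | LSc (r : R) (e : lexp) | LAdd (e1 e2 : lexp) | LZ.

Section Lin.
Context {A : CstarAlg}.
Local Infix "⊕" := (@cadd A) (at level 50, left associativity).
Local Infix "⊗" := (@cmul A) (at level 40, left associativity).
Local Notation sc r x := (cscal A (r, 0) x).

Fixpoint lint (env : list A) (e : lexp) : A :=
  match e with
  | LAt i => nth i env c0
  | LSc r e => sc r (lint env e)
  | LAdd e1 e2 => lint env e1 ⊕ lint env e2
  | LZ => c0
  end.
Fixpoint lcoef (e : lexp) (i : nat) : R :=
  match e with
  | LAt j => if Nat.eqb i j then 1 else 0
  | LSc r e => r * lcoef e i
  | LAdd e1 e2 => lcoef e1 i + lcoef e2 i
  | LZ => 0
  end.

Lemma lint_nf env e : lint env e = lsum (seq 0 (length env)) (fun i => sc (lcoef e i) (nth i env c0)).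
Proof.
  induction e; simpl.
  - destruct (Nat.lt_ge_cases i (length env)).
    + rewrite (lsum_single _ _ i). rewrite Nat.eqb_refl, sc_1; auto. apply seq_NoDup. apply in_seq; lia.
      intros y _ Hy. destruct (Nat.eqb_spec y i); [congruence|]. apply sc_0.
    + rewrite nth_overflow by auto. symmetry; apply lsum_zero. intros y Hy. apply in_seq in Hy.
      destruct (Nat.eqb_spec y i); [lia|]. apply sc_0.
  - rewrite IHe, <- lsum_sc. apply lsum_ext; intros. rewrite sc_mul. auto.
  - rewrite IHe1, IHe2, <- lsum_add. apply lsum_ext; intros. rewrite sc_addl. auto.
  - symmetry; apply lsum_zero. intros; apply sc_0.
Qed.

Lemma lin_eq env e1 e2 : (forall i, (i < length env)%nat -> lcoef e1 i = lcoef e2 i) ->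
  lint env e1 = lint env e2.
Proof.
  intros H. rewrite !lint_nf. apply lsum_ext. intros i Hi. apply in_seq in Hi. rewrite H by lia. auto.
Qed.

Lemma lin_hyp (P Q X Y : A) k : P = Q -> X ⊕ sc (-1) Y = sc k (P ⊕ sc (-1) Q) -> X = Y.
Proof. intros H1 H2. apply sub_eq0. rewrite H2, H1, sc_neg_add. apply sc_c0. Qed.
Lemma lin_hyp2 (P1 Q1 P2 Q2 X Y : A) k1 k2 : P1 = Q1 -> P2 = Q2 ->
  X ⊕ sc (-1) Y = sc k1 (P1 ⊕ sc (-1) Q1) ⊕ sc k2 (P2 ⊕ sc (-1) Q2) -> X = Y.
Proof. intros H1 H2 H3. apply sub_eq0. rewrite H3, H1, H2, !sc_neg_add, !sc_c0. apply add0l. Qed.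

End Lin.

Ltac lmem x l := lazymatch l with
  | @nil _ => constr:(false)
  | @cons _ x _ => constr:(true)
  | @cons _ _ ?l' => lmem x l'
  end.
Ltac ladd x l := let b := lmem x l in lazymatch b with true => l | false => constr:(x :: l) end.
Ltac lcollect t l := lazymatch t with
  | @cadd _ ?x ?y => let l1 := lcollect x l in lcollect y l1
  | cscal _ (?r, 0) ?x => lcollect x l
  | @c0 _ => l
  | _ => ladd t l
  end.
Ltac lidx x l := lazymatch l with
  | @cons _ x _ => constr:(O)
  | @cons _ _ ?l' => let i := lidx x l' in constr:(S i)
  end.
Ltac lreify t l := lazymatch t with
  | @cadd _ ?x ?y => let a := lreify x l in let b := lreify y l in constr:(LAdd a b)
  | cscal _ (?r, 0) ?x => let a := lreify x l in constr:(LSc r a)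
  | @c0 _ => constr:(LZ)
  | _ => let i := lidx t l in constr:(LAt i)
  end.
Ltac lin := lazymatch goal with |- @eq (car ?A) ?lhs ?rhs =>
   let l0 := constr:(@nil (car A)) in
   let l1 := lcollect lhs l0 in let l2 := lcollect rhs l1 in
   let e1 := lreify lhs l2 in let e2 := lreify rhs l2 in
   change (lint l2 e1 = lint l2 e2); apply lin_eq;
   let i := fresh "i" in let Hi := fresh "Hi" in intros i Hi;
   repeat (destruct i as [|i]; [simpl; lra | try (simpl in Hi; lia)])
  end.


Section FArg.
Context {A : CstarAlg}.
Local Infix "⊕" := (@cadd A) (at level 50, left associativity).
Local Infix "⊗" := (@cmul A) (at level 40, left associativity).
Local Notation sc r x := (cscal A (r, 0) x).
Local Notation st x := (@cstar A x).

Lemma fgen (n : nat) (w : nat -> A) : (5 <= n)%nat ->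
  (forall a b, (a < n)%nat -> (b < n)%nat -> a <> b -> (w a ⊕ w b) ⊗ (w a ⊕ w b) = w a ⊕ w b) ->
  lsum (seq 0 n) w = c1 ->
  (forall a, (a < n)%nat -> w a ⊗ w a = w a) /\
  (forall a b, (a < n)%nat -> (b < n)%nat -> a <> b -> w a ⊗ w b = c0).
Proof.
  intros Hn Hpair Hsum.
  assert (INn : 5 <= INR n) by (replace 5 with (INR 5) by (simpl; ring); apply le_INR; auto).
  set (f := fun a => w a ⊗ w a ⊕ sc (-1) (w a)).
  assert (H2 : forall a b, (a < n)%nat -> (b < n)%nat -> a <> b ->
     w a ⊗ w b ⊕ w b ⊗ w a = sc (-1) (f a ⊕ f b)).
  { intros a b Ha Hb Hab. pose proof (Hpair a b Ha Hb Hab) as H.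
    rewrite mulDl, !mulDr in H. unfold f. apply (lin_hyp _ _ _ _ 1 H). lin. }
  set (F := lsum (seq 0 n) f).
  assert (Hf : forall a, (a < n)%nat -> sc (INR n - 4) (f a) ⊕ F = c0).
  { intros a Ha.
    set (l' := remove Nat.eq_dec a (seq 0 n)).
    assert (Ha' : In a (seq 0 n)) by (apply in_seq; lia).
    assert (E1 : F = f a ⊕ lsum l' f) by (apply lsum_remove; auto; apply seq_NoDup).
    set (G := fun b => w a ⊗ w b ⊕ w b ⊗ w a).
    assert (E2 : lsum (seq 0 n) G = w a ⊕ w a).
    { unfold G. rewrite lsum_add, <- lsum_mull, <- lsum_mulr, Hsum, mul1r, mul1l. auto. }
    rewrite (lsum_remove Nat.eq_dec _ G a) in E2 by (auto; apply seq_NoDup). fold l' in E2.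
    assert (E3 : lsum l' G = sc (-1) (sc (INR n - 1) (f a) ⊕ lsum l' f)).
    { transitivity (lsum l' (fun b => sc (-1) (f a ⊕ f b))).
      apply lsum_ext. intros b Hb. unfold l' in Hb. apply in_remove in Hb. destruct Hb as [Hb Hne].
      apply in_seq in Hb. apply H2; lia.
      rewrite lsum_sc, lsum_add. f_equal. f_equal.
      transitivity (lsum l' (fun _ => sc 1 (f a))). apply lsum_ext; intros; rewrite sc_1; auto.
      rewrite lsum_const, Rsum_const. f_equal. f_equal. unfold l'.
      assert (length (remove Nat.eq_dec a (seq 0 n)) = (n - 1)%nat).
      { pose proof (remove_length_lt Nat.eq_dec (seq 0 n) a Ha').
        rewrite length_seq in H. 
        assert (forall l, NoDup l -> In a l -> length (remove Nat.eq_dec a l) = (length l - 1)%nat).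
        { induction l as [|z l IH]; simpl; intros Hnd Hin. contradiction.
          inversion Hnd; subst. destruct (Nat.eq_dec a z) as [<-|Hne].
          rewrite notin_remove; auto. lia.
          simpl. destruct Hin as [->|Hin]. congruence. rewrite IH; auto. destruct l. contradiction. simpl. lia. }
        rewrite H0; auto. rewrite length_seq; auto. apply seq_NoDup. }
      rewrite H. rewrite minus_INR by lia. simpl. ring. }
    rewrite E3 in E2. unfold G in E2. unfold f in E1, E2 |- *.
    apply (lin_hyp2 _ _ _ _ _ _ 1 (-1) E1 E2). lin. }
  assert (HF : F = c0).
  { assert (E : lsum (seq 0 n) (fun a => sc (INR n - 4) (f a) ⊕ F) = c0).
    { apply lsum_zero. intros a Ha. apply in_seq in Ha. apply Hf. lia. }
    rewrite lsum_add, lsum_sc in E. fold F in E.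
    assert (E' : lsum (seq 0 n) (fun _ => F) = sc (INR n) F).
    { transitivity (lsum (seq 0 n) (fun _ => sc 1 F)). apply lsum_ext; intros; rewrite sc_1; auto.
      rewrite lsum_const, Rsum_const, length_seq. f_equal. f_equal. ring. }
    rewrite E' in E.
    assert (E2 : sc (2 * INR n - 4) F = c0). { rewrite <- E. lin. }
    transitivity (sc (/ (2 * INR n - 4)) (sc (2 * INR n - 4) F)).
    rewrite sc_mul. replace (/ (2 * INR n - 4) * (2 * INR n - 4)) with 1 by (field; lra). rewrite sc_1; auto.
    rewrite E2. apply sc_c0. }
  assert (Hf0 : forall a, (a < n)%nat -> f a = c0).
  { intros a Ha. pose proof (Hf a Ha) as E. rewrite HF, add0r in E.
    transitivity (sc (/ (INR n - 4)) (sc (INR n - 4) (f a))).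
    rewrite sc_mul. replace (/ (INR n - 4) * (INR n - 4)) with 1 by (field; lra). rewrite sc_1; auto.
    rewrite E. apply sc_c0. }
  assert (Hsq : forall a, (a < n)%nat -> w a ⊗ w a = w a).
  { intros a Ha. apply sub_eq0. apply Hf0; auto. }
  split; auto.
  intros a b Ha Hb Hab.
  assert (Ac : w a ⊗ w b ⊕ w b ⊗ w a = c0).
  { rewrite H2, !Hf0, add0l, sc_c0; auto. }
  assert (L : w a ⊗ (w a ⊗ w b ⊕ w b ⊗ w a) = c0) by (rewrite Ac; apply mul0r).
  assert (R' : (w a ⊗ w b ⊕ w b ⊗ w a) ⊗ w a = c0) by (rewrite Ac; apply mul0l).
  rewrite mulDr, !mulA, Hsq in L by auto. rewrite mulDl, <- !mulA, Hsq, mulA in R' by auto.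
  assert (C : w a ⊗ w b = w b ⊗ w a).
  { apply (lin_hyp2 _ _ _ _ _ _ 1 (-1) L R'). lin. }
  rewrite C in Ac.
  transitivity (sc (/2) (sc 2 (w b ⊗ w a))).
  rewrite sc_mul. replace (/ 2 * 2) with 1 by field. rewrite sc_1; auto.
  replace (sc 2 (w b ⊗ w a)) with (w b ⊗ w a ⊕ w b ⊗ w a) by lin. rewrite Ac. apply sc_c0.
Qed.

End FArg.

Section Magic.
Context {A : CstarAlg}.
Local Infix "⊕" := (@cadd A) (at level 50, left associativity).
Local Infix "⊗" := (@cmul A) (at level 40, left associativity).
Local Notation sc r x := (cscal A (r, 0) x).
Local Notation nrm x := (cnorm A x).
Local Notation st x := (@cstar A x).

Variable n : nat.
Hypothesis Hn : (5 <= n)%nat.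
Variable u : nat * nat -> nat * nat -> A.
Local Notation V := (two_subsets n).
Hypothesis HP : forall x B, In x V -> In B V -> Proj (u x B).
Hypothesis Hrow : forall x, In x V -> lsum V (u x) = c1.
Hypothesis Hcol : forall B, In B V -> lsum V (fun y => u y B) = c1.
Hypothesis Hpres : forall y x B B', In y V -> In x V -> In B V -> In B' V ->
  inter_size y x <> inter_size B B' -> u y B ⊗ u x B' = c0.

Lemma row_orth x B B' : In x V -> In B V -> In B' V -> B <> B' -> u x B ⊗ u x B' = c0.
Proof.
  intros. apply Hpres; auto. rewrite (proj2 (inter_size_2 n x x H H) eq_refl).
  intro E. symmetry in E. apply (inter_size_2 n B B') in E; auto.
Qed.

Definition Ef x c := lsum V (fun B => sc (ind c B) (u x B)).

Lemma ind01 c B : ind c B * ind c B = ind c B.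
Proof. unfold ind; destruct (_ || _)%bool; ring. Qed.

Lemma Ef_sa x c : In x V -> st (Ef x c) = Ef x c.
Proof.
  intros Hx. unfold Ef. rewrite lsum_star. apply lsum_ext. intros B HB.
  rewrite star_sc, (proj1 (HP x B Hx HB)). auto.
Qed.

Lemma Ef_proj x c : In x V -> Proj (Ef x c).
Proof.
  intros Hx. split. apply Ef_sa; auto.
  unfold Ef at 1. rewrite lsum_mulr. unfold Ef. apply lsum_ext. intros B HB.
  rewrite mul_scl, lsum_mull. rewrite (lsum_single _ _ B). rewrite mul_scr, sc_mul, ind01.
  rewrite (proj2 (HP x B Hx HB)). auto.
  apply NoDup_two_subsets. auto.
  intros B' HB' Hne. rewrite mul_scr, row_orth; auto. apply sc_c0.
Qed.

Lemma star_rel x B : In x V -> In B V ->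
  lsum V (fun y => sc (isz y x) (u y B)) = lsum V (fun B' => sc (isz B B') (u x B')).
Proof.
  intros Hx HB.
  transitivity (lsum V (fun y => lsum V (fun B' => sc (isz y x) (u y B ⊗ u x B')))).
  { apply lsum_ext. intros y Hy. rewrite lsum_sc, <- lsum_mull, Hrow, mul1r; auto. }
  transitivity (lsum V (fun B' => lsum V (fun y => sc (isz B B') (u y B ⊗ u x B')))).
  2: { apply lsum_ext. intros B' HB'. rewrite lsum_sc, <- lsum_mulr, Hcol, mul1l; auto. }
  rewrite lsum_swap. apply lsum_ext. intros B' HB'. apply lsum_ext. intros y Hy.
  unfold isz. destruct (Nat.eq_dec (inter_size y x) (inter_size B B')) as [E|E].
  rewrite E; auto. rewrite Hpres; auto. rewrite !sc_c0; auto.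
Qed.

Definition Nf a c := lsum V (fun y => sc (ind a y) (Ef y c)).
Definition Wf a c := sc (/ (INR n - 2)) (Nf a c ⊕ sc (-1) c1).

Lemma sc_comm r s (x : A) : sc r (sc s x) = sc s (sc r x).
Proof. rewrite !sc_mul, Rmult_comm. auto. Qed.

Lemma INRn : 5 <= INR n.
Proof. replace 5 with (INR 5) by (simpl; ring). apply le_INR; auto. Qed.

Lemma NN a b c : In (a, b) V -> (c < n)%nat ->
  Nf a c ⊕ Nf b c = sc 2 c1 ⊕ sc (INR n - 2) (Ef (a, b) c).
Proof.
  intros Hx Hc. set (x := (a, b)) in *. unfold Nf. rewrite <- lsum_scsum.
  transitivity (lsum V (fun y => sc (isz y x) (Ef y c))).
  { apply lsum_ext; intros y Hy. f_equal. f_equal.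
    unfold isz. rewrite (inter_size_sym n y x Hy Hx). fold (isz x y). rewrite isz_ind. auto. }
  unfold Ef.
  transitivity (lsum V (fun y => lsum V (fun B => sc (ind c B) (sc (isz y x) (u y B))))).
  { apply lsum_ext; intros y Hy. rewrite <- lsum_sc. apply lsum_ext; intros. apply sc_comm. }
  rewrite lsum_swap.
  transitivity (lsum V (fun B => sc (ind c B) (lsum V (fun B' => sc (isz B B') (u x B'))))).
  { apply lsum_ext; intros B HB. rewrite <- star_rel, lsum_sc; auto. }
  transitivity (lsum V (fun B' => sc (Rsum V (fun B => ind c B * isz B B')) (u x B'))).
  { transitivity (lsum V (fun B => lsum V (fun B' => sc (ind c B * isz B B') (u x B')))).
    apply lsum_ext; intros. rewrite <- lsum_sc. apply lsum_ext; intros. apply sc_mul.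
    rewrite lsum_swap. apply lsum_ext; intros. apply lsum_const. }
  transitivity (lsum V (fun B' => sc 2 (u x B') ⊕ sc (INR n - 2) (sc (ind c B') (u x B')))).
  { apply lsum_ext; intros B' HB'. rewrite C4; auto. rewrite sc_addl, sc_mul. auto. }
  rewrite lsum_add, !lsum_sc, Hrow; auto.
Qed.

Lemma E_W a b c : In (a, b) V -> (c < n)%nat -> Ef (a, b) c = Wf a c ⊕ Wf b c.
Proof.
  intros Hx Hc. pose proof INRn. unfold Wf. rewrite <- sc_addr.
  transitivity (sc (/ (INR n - 2)) (Nf a c ⊕ Nf b c ⊕ sc (-2) c1)).
  2: { f_equal. lin. }
  rewrite NN by auto.
  transitivity (sc (/ (INR n - 2)) (sc (INR n - 2) (Ef (a, b) c))).
  rewrite sc_mul. replace (/ (INR n - 2) * (INR n - 2)) with 1 by (field; lra). rewrite sc_1; auto.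
  f_equal. lin.
Qed.

Lemma Nf_sum c : (c < n)%nat -> lsum (seq 0 n) (fun a => Nf a c) = sc (2 * (INR n - 1)) c1.
Proof.
  intros Hc. unfold Nf. rewrite lsum_swap.
  transitivity (lsum V (fun y => sc 2 (Ef y c))).
  { apply lsum_ext; intros y Hy. rewrite lsum_const, C3; auto. }
  rewrite lsum_sc. unfold Ef. rewrite lsum_swap.
  transitivity (sc 2 (lsum V (fun B => sc (ind c B) c1))).
  { f_equal. apply lsum_ext; intros B HB. rewrite lsum_sc, Hcol; auto. }
  rewrite lsum_const, C1, sc_mul; auto.
Qed.

Lemma Wsum c : (c < n)%nat -> lsum (seq 0 n) (fun a => Wf a c) = c1.
Proof.
  intros Hc. pose proof INRn. unfold Wf. rewrite lsum_sc, lsum_add, Nf_sum by auto.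
  transitivity (sc (/ (INR n - 2)) (sc (2 * (INR n - 1)) c1 ⊕ sc (INR n * -1) c1)).
  { f_equal. f_equal. rewrite lsum_const, Rsum_const, length_seq. reflexivity. }
  rewrite <- sc_addl, sc_mul. replace (/ (INR n - 2) * (2 * (INR n - 1) + INR n * -1)) with 1 by (field; lra).
  apply sc_1.
Qed.

Lemma Nf_sa a c : st (Nf a c) = Nf a c.
Proof.
  unfold Nf. rewrite lsum_star. apply lsum_ext; intros y Hy. rewrite star_sc, Ef_sa; auto.
Qed.

Lemma Wf_sa a c : st (Wf a c) = Wf a c.
Proof. unfold Wf. rewrite star_sc, star_add, star_sc, star_c1, Nf_sa. auto. Qed.

Lemma Wpair_proj a b c : (a < n)%nat -> (b < n)%nat -> a <> b -> (c < n)%nat ->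
  (Wf a c ⊕ Wf b c) ⊗ (Wf a c ⊕ Wf b c) = Wf a c ⊕ Wf b c.
Proof.
  intros Ha Hb Hab Hc. destruct (Nat.lt_ge_cases a b).
  - rewrite <- E_W; auto. apply Ef_proj. apply in_two_subsets; lia. apply in_two_subsets; lia.
  - rewrite (addC (Wf a c)). rewrite <- E_W; auto. apply Ef_proj. apply in_two_subsets; lia. apply in_two_subsets; lia.
Qed.

Lemma Wcol c : (c < n)%nat ->
  (forall a, (a < n)%nat -> Wf a c ⊗ Wf a c = Wf a c) /\
  (forall a b, (a < n)%nat -> (b < n)%nat -> a <> b -> Wf a c ⊗ Wf b c = c0).
Proof.
  intros Hc. apply (fgen n (fun a => Wf a c) Hn).
  intros; apply Wpair_proj; auto. apply Wsum; auto.
Qed.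

Lemma pair_unique c d B B1 : In B V -> In B1 V -> c <> d -> ind c B = 1 -> ind d B = 1 -> B1 <> B ->
  ind c B1 * ind d B1 = 0.
Proof.
  intros HB HB1 Hcd H1 H2 Hne. apply in_ts in HB, HB1. destruct B as [p q], B1 as [p1 q1]. simpl in *.
  unfold ind in *; simpl in *.
  destruct (Nat.eqb_spec c p), (Nat.eqb_spec c q), (Nat.eqb_spec d p), (Nat.eqb_spec d q),
    (Nat.eqb_spec c p1), (Nat.eqb_spec c q1), (Nat.eqb_spec d p1), (Nat.eqb_spec d q1); simpl in *;
    try lra; exfalso; apply Hne; f_equal; lia.
Qed.

Lemma uEE x B c d : In x V -> In B V -> c <> d -> ind c B = 1 -> ind d B = 1 ->
  u x B = Ef x c ⊗ Ef x d.
Proof.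
  intros Hx HB Hcd H1 H2. unfold Ef at 1. rewrite lsum_mulr.
  transitivity (lsum V (fun B1 => sc (ind c B1 * ind d B1) (u x B1))).
  2: { apply lsum_ext. intros B1 HB1. rewrite mul_scl. unfold Ef. rewrite lsum_mull.
       rewrite (lsum_single _ _ B1). rewrite mul_scr, (proj2 (HP x B1 Hx HB1)), sc_mul. auto.
       apply NoDup_two_subsets. auto.
       intros B' HB' Hne. rewrite mul_scr, row_orth; auto. apply sc_c0. }
  rewrite (lsum_single _ _ B). rewrite H1, H2, Rmult_1_l, sc_1; auto.
  apply NoDup_two_subsets. auto.
  intros B1 HB1 Hne. rewrite (pair_unique c d B B1); auto. apply sc_0.
Qed.

End Magic.

Section Final.
Context {A : CstarAlg}.
Local Infix "⊕" := (@cadd A) (at level 50, left associativity).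
Local Infix "⊗" := (@cmul A) (at level 40, left associativity).
Local Notation sc r x := (cscal A (r, 0) x).
Local Notation st x := (@cstar A x).

Variable n : nat.
Hypothesis Hn : (5 <= n)%nat.
Variable u : nat * nat -> nat * nat -> A.
Local Notation V := (two_subsets n).
Hypothesis HP : forall x B, In x V -> In B V -> Proj (u x B).
Hypothesis Hrow : forall x, In x V -> lsum V (u x) = c1.
Hypothesis Hcol : forall B, In B V -> lsum V (fun y => u y B) = c1.
Hypothesis Hpres : forall y x B B', In y V -> In x V -> In B V -> In B' V ->
  inter_size y x <> inter_size B B' -> u y B ⊗ u x B' = c0.

Let ut := fun y B => u B y.
Lemma HPt : forall x B, In x V -> In B V -> Proj (ut x B).
Proof. intros; apply HP; auto. Qed.
Lemma Hrowt : forall x, In x V -> lsum V (ut x) = c1.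
Proof. intros; apply Hcol; auto. Qed.
Lemma Hcolt : forall B, In B V -> lsum V (fun y => ut y B) = c1.
Proof. intros; apply Hrow; auto. Qed.
Lemma Hprest : forall y x B B', In y V -> In x V -> In B V -> In B' V ->
  inter_size y x <> inter_size B B' -> ut y B ⊗ ut x B' = c0.
Proof. intros. unfold ut. apply Hpres; auto. Qed.

Lemma Nf_t a c : Nf n ut a c = Nf n u c a.
Proof.
  unfold Nf, Ef, ut.
  transitivity (lsum V (fun y => lsum V (fun B => sc (ind a y) (sc (ind c B) (u B y))))).
  apply lsum_ext; intros. rewrite lsum_sc; auto.
  transitivity (lsum V (fun y => lsum V (fun B => sc (ind c y) (sc (ind a B) (u y B))))).
  2: { apply lsum_ext; intros. rewrite lsum_sc; auto. }
  rewrite lsum_swap. apply lsum_ext; intros. apply lsum_ext; intros. apply sc_comm.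
Qed.

Lemma Wf_t a c : Wf n ut a c = Wf n u c a.
Proof. unfold Wf. rewrite Nf_t. auto. Qed.

Lemma Wp a c : (a < n)%nat -> (c < n)%nat -> Wf n u a c ⊗ Wf n u a c = Wf n u a c.
Proof. intros. apply (proj1 (Wcol n Hn u HP Hrow Hcol Hpres c H0)); auto. Qed.
Lemma Wc a b c : (a < n)%nat -> (b < n)%nat -> (c < n)%nat -> a <> b -> Wf n u a c ⊗ Wf n u b c = c0.
Proof. intros. apply (proj2 (Wcol n Hn u HP Hrow Hcol Hpres c H1)); auto. Qed.
Lemma Wr a c d : (a < n)%nat -> (c < n)%nat -> (d < n)%nat -> c <> d -> Wf n u a c ⊗ Wf n u a d = c0.
Proof.
  intros. rewrite <- !Wf_t. apply (proj2 (Wcol n Hn ut HPt Hrowt Hcolt Hprest a H)); auto.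
Qed.

Lemma EW a b c : (a < n)%nat -> (b < n)%nat -> a <> b -> (c < n)%nat ->
  Ef n u (Nat.min a b, Nat.max a b) c = Wf n u a c ⊕ Wf n u b c.
Proof.
  intros. destruct (Nat.lt_ge_cases a b).
  - rewrite Nat.min_l, Nat.max_r by lia. apply E_W; auto. apply in_two_subsets; lia.
  - rewrite Nat.min_r, Nat.max_l by lia. rewrite addC. apply E_W; auto. apply in_two_subsets; lia.
Qed.

Lemma W_comm a b c d : (a < n)%nat -> (b < n)%nat -> (c < n)%nat -> (d < n)%nat ->
  Wf n u a c ⊗ Wf n u b d = Wf n u b d ⊗ Wf n u a c.
Proof.
  intros Ha Hb Hc Hd.
  destruct (Nat.eq_dec a b) as [<-|Hab].
  { destruct (Nat.eq_dec c d) as [<-|Hcd]. auto. rewrite !Wr; auto. }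
  destruct (Nat.eq_dec c d) as [<-|Hcd].
  { rewrite !Wc; auto. }
  set (x := (Nat.min a b, Nat.max a b)). set (B := (Nat.min c d, Nat.max c d)).
  assert (Hx : In x V) by (apply in_two_subsets; lia).
  assert (HB : In B V) by (apply in_two_subsets; lia).
  assert (Ic : ind c B = 1).
  { unfold ind, B; simpl. destruct (Nat.min_spec c d) as [[? ->]|[? ->]]; rewrite ?Nat.eqb_refl; simpl; auto.
    destruct (Nat.max_spec c d) as [[? ->]|[? ->]]; rewrite ?Nat.eqb_refl; simpl; rewrite ?orb_true_r; auto; lia. }
  assert (Id : ind d B = 1).
  { unfold ind, B; simpl. destruct (Nat.min_spec c d) as [[? ->]|[? ->]].
    destruct (Nat.max_spec c d) as [[? ->]|[? ->]]; rewrite ?Nat.eqb_refl; simpl; rewrite ?orb_true_r; auto; lia.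
    rewrite Nat.eqb_refl; auto. }
  pose proof (uEE n Hn u HP Hpres x B c d Hx HB Hcd Ic Id) as E.
  assert (Exc : Ef n u x c = Wf n u a c ⊕ Wf n u b c) by (unfold x; apply EW; auto).
  assert (Exd : Ef n u x d = Wf n u a d ⊕ Wf n u b d) by (unfold x; apply EW; auto).
  rewrite Exc, Exd in E.
  set (P := Wf n u a c) in *. set (Q := Wf n u b d) in *. set (R := Wf n u b c) in *. set (S := Wf n u a d) in *.
  assert (PP : P ⊗ P = P) by (apply Wp; auto).
  assert (PR : P ⊗ R = c0) by (apply Wc; auto).
  assert (PS : P ⊗ S = c0) by (apply Wr; auto).
  assert (SP : S ⊗ P = c0) by (apply Wr; auto).
  assert (RQ : R ⊗ Q = c0) by (apply Wr; auto).
  assert (Us : st (u x B) = u x B) by (exact (proj1 (HP x B Hx HB))).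
  assert (E1 : P ⊗ u x B = P ⊗ Q).
  { rewrite E, mulA.
    replace (P ⊗ (P ⊕ R)) with P by (rewrite mulDr, PP, PR, add0r; auto).
    rewrite mulDr, PS, add0l. auto. }
  assert (E2 : u x B ⊗ P = P ⊗ Q ⊗ P).
  { rewrite E, <- mulA.
    replace ((S ⊕ Q) ⊗ P) with (Q ⊗ P) by (rewrite mulDl, SP, add0l; auto).
    rewrite mulDl, (mulA R Q P), RQ, mul0l, add0r, mulA. auto. }
  assert (Ps : st P = P) by apply Wf_sa, HP.
  assert (Qs : st Q = Q) by apply Wf_sa, HP.
  assert (E3 : Q ⊗ P = P ⊗ Q ⊗ P).
  { transitivity (st (P ⊗ u x B)). rewrite E1, star_mul, Ps, Qs; auto.
    rewrite star_mul, Us, Ps. exact E2. }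
  rewrite E3. transitivity (st (Q ⊗ P)). rewrite star_mul, Ps, Qs; auto.
  rewrite E3, !star_mul, Ps, Qs, mulA. auto.
Qed.

Lemma u_W a b c d : In (a, b) V -> In (c, d) V ->
  u (a, b) (c, d) = (Wf n u a c ⊕ Wf n u b c) ⊗ (Wf n u a d ⊕ Wf n u b d).
Proof.
  intros H1 H2. assert (H2' := H2). apply in_two_subsets in H2'.
  rewrite (uEE n Hn u HP Hpres (a, b) (c, d) c d); auto.
  rewrite !(E_W n Hn u Hrow Hcol Hpres); auto; lia.
  lia. unfold ind; simpl; rewrite Nat.eqb_refl; auto.
  unfold ind; simpl; rewrite Nat.eqb_refl, orb_true_r; auto.
Qed.

Lemma comm_add (X Y Z : A) : X ⊗ Z = Z ⊗ X -> Y ⊗ Z = Z ⊗ Y -> (X ⊕ Y) ⊗ Z = Z ⊗ (X ⊕ Y).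
Proof. intros; rewrite mulDl, mulDr; congruence. Qed.
Lemma comm_mul (X Y Z : A) : X ⊗ Z = Z ⊗ X -> Y ⊗ Z = Z ⊗ Y -> (X ⊗ Y) ⊗ Z = Z ⊗ (X ⊗ Y).
Proof. intros H1 H2. rewrite <- mulA, H2, mulA, H1, mulA. auto. Qed.

Lemma u_commW x B a c : In x V -> In B V -> (a < n)%nat -> (c < n)%nat ->
  u x B ⊗ Wf n u a c = Wf n u a c ⊗ u x B.
Proof.
  intros Hx HB Ha Hc. destruct x as [x1 x2], B as [b1 b2].
  assert (Hx' := Hx). assert (HB' := HB). apply in_two_subsets in Hx', HB'.
  rewrite u_W by auto. apply comm_mul; apply comm_add; apply W_comm; lia.
Qed.

Lemma u_comm x B y B' : In x V -> In B V -> In y V -> In B' V ->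
  u x B ⊗ u y B' = u y B' ⊗ u x B.
Proof.
  intros Hx HB Hy HB'. destruct y as [y1 y2], B' as [b1 b2].
  assert (Hy' := Hy). assert (HB2 := HB'). apply in_two_subsets in Hy', HB2.
  rewrite u_W by auto. symmetry. apply comm_mul; apply comm_add; symmetry; apply u_commW; auto; lia.
Qed.

End Final.

Definition pdec : forall x y : nat * nat, {x = y} + {x <> y}.
Proof. decide equality; apply Nat.eq_dec. Defined.

Lemma inter_size_01 n v w : In v (two_subsets n) -> In w (two_subsets n) -> v <> w ->
  (inter_size v w = 0 \/ inter_size v w = 1)%nat.
Proof.
  intros Hv Hw Hne. pose proof (inter_size_le2 v w).
  assert (inter_size v w <> 2%nat) by (intro E; apply (inter_size_2 n v w Hv Hw) in E; auto). lia.
Qed.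

Lemma full_pres (A : CstarAlg) n (k : nat) (u : nat * nat -> nat * nat -> A) :
  (k = 0 \/ k = 1)%nat ->
  magic_graph_rel A (two_subsets n) (fun v w => inter_size v w = k) u ->
  (forall x B, In x (two_subsets n) -> In B (two_subsets n) -> Proj (u x B)) /\
  (forall x, In x (two_subsets n) -> lsum (two_subsets n) (u x) = c1) /\
  (forall B, In B (two_subsets n) -> lsum (two_subsets n) (fun y => u y B) = c1) /\
  (forall y x B B', In y (two_subsets n) -> In x (two_subsets n) -> In B (two_subsets n) -> In B' (two_subsets n) ->
     inter_size y x <> inter_size B B' -> cmul (u y B) (u x B') = c0).
Proof.
  intros Hk [HR1 [HR2 HR3]].
  assert (HP : forall x B, In x (two_subsets n) -> In B (two_subsets n) -> Proj (u x B)).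
  { intros x B Hx HB. destruct (HR1 x B Hx HB) as [H1 H2]. split; auto. }
  assert (Hrow : forall x, In x (two_subsets n) -> lsum (two_subsets n) (u x) = c1).
  { intros x Hx. exact (proj1 (HR2 x Hx)). }
  assert (Hcol : forall B, In B (two_subsets n) -> lsum (two_subsets n) (fun y => u y B) = c1).
  { intros B HB. exact (proj2 (HR2 B HB)). }
  split; auto. split; auto. split; auto.
  intros y x B B' Hy Hx HB HB' Hne.
  destruct (pdec y x) as [<-|Hyx].
  - assert (B <> B').
    { intro E; subst. apply Hne. rewrite (proj2 (inter_size_2 n y y Hy Hy) eq_refl).
      symmetry. apply (proj2 (inter_size_2 n B' B' HB' HB') eq_refl). }
    apply (lemO pdec (two_subsets n) (u y)); auto. apply NoDup_two_subsets.
  - destruct (pdec B B') as [<-|HBB].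
    + apply (lemO pdec (two_subsets n) (fun z => u z B)); auto. apply NoDup_two_subsets.
    + pose proof (inter_size_01 n y x Hy Hx Hyx). pose proof (inter_size_01 n B B' HB HB' HBB).
      refine (proj1 (HR3 y B x B' Hy HB Hx HB' _)). lia.
Qed.

Theorem theorem1p3 (n : nat) (hn : (5 <= n)%nat) :
  no_quantum_symmetry (two_subsets n) johnson_adj /\
  no_quantum_symmetry (two_subsets n) kneser_adj.
Proof.
  split; intros A u Hrel i j k l Hi Hj Hk Hl.
  - destruct (full_pres A n 1 u (or_intror eq_refl) Hrel) as [HP [Hrow [Hcol Hpres]]].
    apply (u_comm n hn u HP Hrow Hcol Hpres); auto.
  - destruct (full_pres A n 0 u (or_introl eq_refl) Hrel) as [HP [Hrow [Hcol Hpres]]].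
    apply (u_comm n hn u HP Hrow Hcol Hpres); auto.
Qed.
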